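(* In the multi-parameter setting described in the context, for every POVM $\{M_m\}$ the Fisher information matrix satisfies $F_M(\theta)\le C_\Upsilon(\theta)$ as $m\times m$ real symmetric matrices (i.e. $C_\Upsilon(\theta)-F_M(\theta)$ is positive semidefinite).
   Context: A multi-parameter quantum channel on density matrices on $\mathbb{C}^d$ is $\rho_0\mapsto\sum_kE_k(\theta)\rho_0E_k(\theta)^\dagger$ with $\theta=(\theta^1,\dots,\theta^m)\in\mathbb{R}^m$, Kraus operators differentiable in $\theta$, $\sum_kE_k^\dagger E_k=I$. The input is a fixed pure state $\rho_0=|\psi_0\rangle\langle\psi_0|$ and $\rho_{out}(\theta)$ the output. Canonical Kraus operators $\{\Upsilon_k(\theta)\}_{k=1}^d$: a differentiable Kraus representation of the same channel with $\mathrm{tr}\{\Upsilon_k\rho_0\Upsilon_j^\dagger\}=\delta_{jk}p_k(\theta)$, whose output eigenvectors $|w_k\rangle=p_k^{-1/2}\Upsilon_k|\psi_0\rangle$ (for $p_k>0$) extend to an orthonormal basis differentiable in $\theta$. Write $X^{(j)}=\partial X/\partial\theta^j$. $C_\Upsilon(\theta)_{jk}=4\sum_l\mathrm{Re}\,\mathrm{tr}\{\Upsilon_l^{(j)}\rho_0\Upsilon_l^{(k)\dagger}\}$. For a POVM $\{M_m\}$ (Hermitian, nonnegative, summing to $I$) with outcome probabilities $p(m;\theta)=\mathrm{tr}\{\rho_{out}(\theta)M_m\}$, the Fisher information matrix is $F_M(\theta)_{jk}=\sum_m p(m;\theta)^{-1}\frac{\partial p(m;\theta)}{\partial\theta^j}\frac{\partial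 p(m;\theta)}{\partial\theta^k}$. *)

(* Defs.v *)
From HB Require Import structures.
From mathcomp Require Import all_boot all_order all_algebra.
From mathcomp Require Import all_classical all_reals all_analysis.
From mathcomp Require Import complex.
Set Implicit Arguments. Unset Strict Implicit. Unset Printing Implicit Defensive.
Import Order.TTheory GRing.Theory Num.Theory.
Import numFieldNormedType.Exports.
Local Open Scope ring_scope.
Local Open Scope complex_scope.

Section QDefs.
Variable R : realType.
Local Notation C := R[i].

Definition adj (p q : nat) (A : 'M[C]_(p, q)) : 'M[C]_(q, p) :=
  (map_mx Num.conj A)^T.

Definition hermitian (d : nat) (A : 'M[C]_d) : Prop := adj A = A.

Definition psd (d : nat) (A : 'M[C]_d) : Prop :=
  forall v : 'cV[C]_d, 0 <= (adj v *m A *m v) 0 0.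

Definition density (d : nat) (rho : 'M[C]_d) : Prop :=
  hermitian rho /\ psd rho /\ \tr rho = 1.

Definition povm (d n : nat) (M : 'I_n -> 'M[C]_d) : Prop :=
  (forall o, hermitian (M o)) /\ (forall o, psd (M o)) /\
  \sum_(o < n) M o = 1%:M.

Definition evec (m : nat) (j : 'I_m) : 'rV[R]_m := delta_mx 0 j.

Definition mx_differentiable (m p q : nat) (F : 'rV[R]_m -> 'M[C]_(p, q)) : Prop :=
  forall (a : 'I_p) (b : 'I_q) (th : 'rV[R]_m),
    differentiable (fun t : 'rV[R]_m => (complex.Re (F t a b) : R^o)) th /\
    differentiable (fun t : 'rV[R]_m => (complex.Im (F t a b) : R^o)) th.

Definition pderiv (m p q : nat) (j : 'I_m) (F : 'rV[R]_m -> 'M[C]_(p, q))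
    (th : 'rV[R]_m) : 'M[C]_(p, q) :=
  \matrix_(a, b)
    (('D_(evec j) (fun t => complex.Re (F t a b)) th) +i*
     ('D_(evec j) (fun t => complex.Im (F t a b)) th)).

Definition proj (d : nat) (psi0 : 'cV[C]_d) : 'M[C]_d := psi0 *m adj psi0.

Definition channel (d K : nat) (E : 'I_K -> 'M[C]_d) (rho : 'M[C]_d) : 'M[C]_d :=
  \sum_(k < K) (E k *m rho *m adj (E k)).

Definition kraus_family (m d K : nat) (E : 'rV[R]_m -> 'I_K -> 'M[C]_d) : Prop :=
  (forall th, \sum_(k < K) (adj (E th k) *m E th k) = 1%:M) /\
  (forall k, mx_differentiable (fun th => E th k)).

Definition canonical_kraus (m d K : nat) (E : 'rV[R]_m -> 'I_K -> 'M[C]_d)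
    (psi0 : 'cV[C]_d) (U : 'rV[R]_m -> 'I_d -> 'M[C]_d) : Prop :=
  kraus_family U /\
  (forall th rho, density rho -> channel (E th) rho = channel (U th) rho) /\
  (exists p : 'rV[R]_m -> 'I_d -> R,
     (forall th j k,
        \tr (U th k *m proj psi0 *m adj (U th j)) = ((j == k)%:R * p th k)%:C) /\
     (* the output eigenvectors extend to an orthonormal basis
        differentiable in theta *)
     (exists W : 'rV[R]_m -> 'M[C]_d,
        mx_differentiable W /\
        (forall th, adj (W th) *m W th = 1%:M) /\
        (forall th k, 0 < p th k ->
           col k (W th) = ((Num.sqrt (p th k))^-1)%:C *: (U th k *m psi0)))).

Definition C_Ups (m d : nat) (U : 'rV[R]_m -> 'I_d -> 'M[C]_d)
    (psi0 : 'cV[C]_d) (th : 'rV[R]_m) : 'M[R]_m :=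
  \matrix_(j, k) (4 * \sum_(l < d)
     complex.Re (\tr (pderiv j (fun t => U t l) th *m proj psi0
                       *m adj (pderiv k (fun t => U t l) th)))).

Definition outprob (m d K n : nat) (E : 'rV[R]_m -> 'I_K -> 'M[C]_d)
    (psi0 : 'cV[C]_d) (M : 'I_n -> 'M[C]_d) (o : 'I_n) (th : 'rV[R]_m) : R :=
  complex.Re (\tr (channel (E th) (proj psi0) *m M o)).

(* Fisher information matrix; terms with p(o;theta) = 0 contribute 0
   (MathComp convention 0^-1 = 0). *)
Definition fisher (m d K n : nat) (E : 'rV[R]_m -> 'I_K -> 'M[C]_d)
    (psi0 : 'cV[C]_d) (M : 'I_n -> 'M[C]_d) (th : 'rV[R]_m) : 'M[R]_m :=
  \matrix_(j, k) \sum_(o < n)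
     ((outprob E psi0 M o th)^-1 *
      'D_(evec j) (outprob E psi0 M o) th *
      'D_(evec k) (outprob E psi0 M o) th).

Definition mx_le (m : nat) (A B : 'M[R]_m) : Prop :=
  forall v : 'rV[R]_m, 0 <= (v *m (B - A) *m v^T) 0 0.

End QDefs.

(* Main.v *)
Require Import Defs.
From HB Require Import structures.
From mathcomp Require Import all_boot all_order all_algebra.
From mathcomp Require Import all_classical all_reals all_analysis.
From mathcomp Require Import complex.
From mathcomp Require Import ring lra.
Import Order.TTheory GRing.Theory Num.Theory.
Import numFieldNormedType.Exports.

Module MH.
Local Open Scope ring_scope.
Local Open Scope complex_scope.

Section Adj.
Variable R : realType.
Local Notation C := R[i].

Lemma adjE p q (A : 'M[C]_(p,q)) i j : adj A i j = Num.conj (A j i).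
Proof. by rewrite /adj !mxE. Qed.

Lemma adj_mul p q r (A : 'M[C]_(p,q)) (B : 'M[C]_(q,r)) :
  adj (A *m B) = adj B *m adj A.
Proof. by rewrite /adj map_mxM trmx_mul. Qed.

Lemma adjK p q (A : 'M[C]_(p,q)) : adj (adj A) = A.
Proof. by apply/matrixP => i j; rewrite !adjE conjCK. Qed.

Lemma adjD p q (A B : 'M[C]_(p,q)) : adj (A + B) = adj A + adj B.
Proof. by apply/matrixP => i j; rewrite !mxE rmorphD. Qed.

Lemma adj_sum p q I (r : seq I) (F : I -> 'M[C]_(p,q)) :
  adj (\sum_(i <- r) F i) = \sum_(i <- r) adj (F i).
Proof.
elim: r => [|a r IH]; first by apply/matrixP=> i j; rewrite !big_nil !mxE rmorph0.
by rewrite !big_cons adjD IH.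
Qed.

Lemma conj_real (c : R) : Num.conj (c%:C : C) = c%:C.
Proof. by apply/eqP; rewrite eq_complex /= oppr0 !eqxx. Qed.

Lemma adjZr p q (c : R) (A : 'M[C]_(p,q)) : adj (c%:C *: A) = c%:C *: adj A.
Proof. apply/matrixP => i j; rewrite !mxE rmorphM; congr (_ * _); exact: conj_real. Qed.

Lemma ReM (x y : C) : complex.Re (x * y) = complex.Re x * complex.Re y - complex.Im x * complex.Im y.
Proof. by case: x => a b; case: y => c d. Qed.
Lemma ImM (x y : C) : complex.Im (x * y) = complex.Re x * complex.Im y + complex.Im x * complex.Re y.
Proof. by case: x => a b; case: y => c d. Qed.
Lemma ReD (x y : C) : complex.Re (x + y) = complex.Re x + complex.Re y.
Proof. by case: x => a b; case: y => c d. Qed.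
Lemma ImD (x y : C) : complex.Im (x + y) = complex.Im x + complex.Im y.
Proof. by case: x => a b; case: y => c d. Qed.
Lemma ReJ (x : C) : complex.Re (Num.conj x) = complex.Re x.
Proof. by case: x. Qed.
Lemma ImJ (x : C) : complex.Im (Num.conj x) = - complex.Im x.
Proof. by case: x. Qed.
End Adj.

End MH.
Import MH.

Module MH2.
Set Implicit Arguments. Unset Strict Implicit.
Local Open Scope ring_scope.
Local Open Scope complex_scope.

Section CD.
Variable R : realType.
Local Notation C := R[i].
Variables (m : nat) (th v : 'rV[R]_m).

Lemma scaleRE (a b : R) : a *: b = a * b. Proof. by []. Qed.
Lemma complexE' (z : C) : z = complex.Re z +i* complex.Im z. Proof. by case: z. Qed.

Definition cder (f : 'rV[R]_m -> C) :=
  derivable (fun t => complex.Re (f t)) th v /\ derivable (fun t => complex.Im (f t)) th v.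
Definition cD (f : 'rV[R]_m -> C) : C :=
  'D_v (fun t => complex.Re (f t)) th +i* 'D_v (fun t => complex.Im (f t)) th.

Lemma cder_cst (c : C) : cder (fun _ => c).
Proof. by split; apply: derivable_cst. Qed.
Lemma cD_cst (c : C) : cD (fun _ => c) = 0.
Proof. by rewrite /cD !derive_cst. Qed.

Lemma cder_add f g : cder f -> cder g -> cder (fun t => f t + g t).
Proof.
move=> [f1 f2] [g1 g2].
have H1 := derivableD f1 g1; have H2 := derivableD f2 g2.
split.
  have -> : (fun t => complex.Re (f t + g t)) = (fun t => complex.Re (f t)) + (fun t => complex.Re (g t)).
    by apply: funext => t; rewrite !fctE; case: (f t) => a b; case: (g t) => c d.
  exact: H1.
have -> : (fun t => complex.Im (f t + g t)) = (fun t => complex.Im (f t)) + (fun t => complex.Im (g t)).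
  by apply: funext => t; rewrite !fctE; case: (f t) => a b; case: (g t) => c d.
exact: H2.
Qed.

Lemma cD_add f g : cder f -> cder g -> cD (fun t => f t + g t) = cD f + cD g.
Proof.
move=> [f1 f2] [g1 g2]; rewrite /cD.
have E1 := deriveD f1 g1; have E2 := deriveD f2 g2.
have -> : (fun t => complex.Re (f t + g t)) = (fun t => complex.Re (f t)) + (fun t => complex.Re (g t)).
  by apply: funext => t; rewrite !fctE; case: (f t) => a b; case: (g t) => c d.
have -> : (fun t => complex.Im (f t + g t)) = (fun t => complex.Im (f t)) + (fun t => complex.Im (g t)).
  by apply: funext => t; rewrite !fctE; case: (f t) => a b; case: (g t) => c d.
by rewrite E1 E2.
Qed.

Lemma cder_mul f g : cder f -> cder g -> cder (fun t => f t * g t).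
Proof.
move=> [f1 f2] [g1 g2].
have M11 := derivableM f1 g1; have M22 := derivableM f2 g2.
have M12 := derivableM f1 g2; have M21 := derivableM f2 g1.
have H1 := derivableB M11 M22; have H2 := derivableD M12 M21.
split.
  have -> : (fun t => complex.Re (f t * g t)) =
     (fun t => complex.Re (f t)) * (fun t => complex.Re (g t)) -
     (fun t => complex.Im (f t)) * (fun t => complex.Im (g t)).
    by apply: funext => t; rewrite !fctE; case: (f t) => a b; case: (g t) => c d.
  exact: H1.
have -> : (fun t => complex.Im (f t * g t)) =
     (fun t => complex.Re (f t)) * (fun t => complex.Im (g t)) +
     (fun t => complex.Im (f t)) * (fun t => complex.Re (g t)).
  by apply: funext => t; rewrite !fctE; case: (f t) => a b; case: (g t) => c d.
exact: H2.
Qed.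

Lemma cD_mul f g : cder f -> cder g -> cD (fun t => f t * g t) = cD f * g th + f th * cD g.
Proof.
move=> [f1 f2] [g1 g2]; rewrite /cD.
have M11 := derivableM f1 g1; have M22 := derivableM f2 g2.
have M12 := derivableM f1 g2; have M21 := derivableM f2 g1.
have E1 := deriveB M11 M22; have E2 := deriveD M12 M21.
have E11 := deriveM f1 g1; have E22 := deriveM f2 g2.
have E12 := deriveM f1 g2; have E21 := deriveM f2 g1.
have -> : (fun t => complex.Re (f t * g t)) =
     (fun t => complex.Re (f t)) * (fun t => complex.Re (g t)) -
     (fun t => complex.Im (f t)) * (fun t => complex.Im (g t)).
  by apply: funext => t; rewrite !fctE; case: (f t) => a b; case: (g t) => c d.
have -> : (fun t => complex.Im (f t * g t)) =
     (fun t => complex.Re (f t)) * (fun t => complex.Im (g t)) +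
     (fun t => complex.Im (f t)) * (fun t => complex.Re (g t)).
  by apply: funext => t; rewrite !fctE; case: (f t) => a b; case: (g t) => c d.
rewrite E1 E2 E11 E22 E12 E21 !scaleRE.
move: ('D_v (fun t => complex.Re (f t)) th) ('D_v (fun t => complex.Im (f t)) th)
      ('D_v (fun t => complex.Re (g t)) th) ('D_v (fun t => complex.Im (g t)) th) => A B A' B'.
case: (f th) => a b; case: (g th) => c d /=.
by congr (_ +i* _); ring.
Qed.

Lemma cder_conj f : cder f -> cder (fun t => Num.conj (f t)).
Proof.
move=> [f1 f2]; have H2 := derivableN f2; split.
  have -> : (fun t => complex.Re (Num.conj (f t))) = (fun t => complex.Re (f t)).
    by apply: funext => t; case: (f t).
  by [].
have -> : (fun t => complex.Im (Num.conj (f t))) = - (fun t => complex.Im (f t)).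
  by apply: funext => t; rewrite !fctE; case: (f t).
exact: H2.
Qed.

Lemma cD_conj f : cder f -> cD (fun t => Num.conj (f t)) = Num.conj (cD f).
Proof.
move=> [f1 f2]; rewrite /cD; have E2 := deriveN f2.
have -> : (fun t => complex.Re (Num.conj (f t))) = (fun t => complex.Re (f t)).
  by apply: funext => t; case: (f t).
have -> : (fun t => complex.Im (Num.conj (f t))) = - (fun t => complex.Im (f t)).
  by apply: funext => t; rewrite !fctE; case: (f t).
by rewrite E2.
Qed.

Lemma cder_sum I (r : seq I) (F : I -> 'rV[R]_m -> C) :
  (forall i, cder (F i)) -> cder (fun t => \sum_(i <- r) F i t).
Proof.
move=> dF; elim: r => [|a r IH].
  have -> : (fun t => \sum_(i <- [::]) F i t) = (fun _ => 0) by apply: funext => t; rewrite big_nil.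
  exact: cder_cst.
have -> : (fun t => \sum_(i <- a :: r) F i t) = (fun t => F a t + \sum_(i <- r) F i t).
  by apply: funext => t; rewrite big_cons.
exact: cder_add.
Qed.

Lemma cD_sum I (r : seq I) (F : I -> 'rV[R]_m -> C) :
  (forall i, cder (F i)) -> cD (fun t => \sum_(i <- r) F i t) = \sum_(i <- r) cD (F i).
Proof.
move=> dF; elim: r => [|a r IH].
  have -> : (fun t => \sum_(i <- [::]) F i t) = (fun _ => 0) by apply: funext => t; rewrite big_nil.
  by rewrite cD_cst big_nil.
have -> : (fun t => \sum_(i <- a :: r) F i t) = (fun t => F a t + \sum_(i <- r) F i t).
  by apply: funext => t; rewrite big_cons.
by rewrite cD_add ?IH ?big_cons //; apply: cder_sum.
Qed.

End CD.

End MH2.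
Import MH2.

Module MH5.
Set Implicit Arguments. Unset Strict Implicit.
Local Open Scope ring_scope.
Local Open Scope complex_scope.

Section MD.
Variable R : realType.
Local Notation C := R[i].
Variables (m : nat) (th v : 'rV[R]_m).

Definition mcder p q (F : 'rV[R]_m -> 'M[C]_(p,q)) := forall a b, cder th v (fun t => F t a b).
Definition mcD p q (F : 'rV[R]_m -> 'M[C]_(p,q)) : 'M[C]_(p,q) :=
  \matrix_(a, b) cD th v (fun t => F t a b).

Lemma mcder_cst p q (A : 'M[C]_(p,q)) : mcder (fun _ => A).
Proof. by move=> a b; apply: cder_cst. Qed.
Lemma mcD_cst p q (A : 'M[C]_(p,q)) : mcD (fun _ => A) = 0.
Proof. by apply/matrixP => a b; rewrite !mxE cD_cst. Qed.

Lemma mcder_mul p q r (F : 'rV[R]_m -> 'M[C]_(p,q)) (G : 'rV[R]_m -> 'M[C]_(q,r)) :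
  mcder F -> mcder G -> mcder (fun t => F t *m G t).
Proof.
move=> dF dG a b.
have -> : (fun t => (F t *m G t) a b) = (fun t => \sum_(c < q) F t a c * G t c b).
  by apply: funext => t; rewrite mxE.
by apply: cder_sum => c; apply: cder_mul.
Qed.

Lemma mcD_mul p q r (F : 'rV[R]_m -> 'M[C]_(p,q)) (G : 'rV[R]_m -> 'M[C]_(q,r)) :
  mcder F -> mcder G -> mcD (fun t => F t *m G t) = mcD F *m G th + F th *m mcD G.
Proof.
move=> dF dG; apply/matrixP => a b; rewrite !mxE.
have -> : (fun t => (F t *m G t) a b) = (fun t => \sum_(c < q) F t a c * G t c b).
  by apply: funext => t; rewrite mxE.
rewrite cD_sum; last by move=> c; apply: cder_mul.
rewrite -big_split /=; apply: eq_bigr => c _.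
by rewrite cD_mul // !mxE.
Qed.

Lemma mcder_adj p q (F : 'rV[R]_m -> 'M[C]_(p,q)) : mcder F -> mcder (fun t => adj (F t)).
Proof.
move=> dF a b.
have -> : (fun t => adj (F t) a b) = (fun t => Num.conj (F t b a)).
  by apply: funext => t; rewrite adjE.
exact: cder_conj.
Qed.

Lemma mcD_adj p q (F : 'rV[R]_m -> 'M[C]_(p,q)) : mcder F -> mcD (fun t => adj (F t)) = adj (mcD F).
Proof.
move=> dF; apply/matrixP => a b; rewrite adjE !mxE.
have -> : (fun t => adj (F t) a b) = (fun t => Num.conj (F t b a)).
  by apply: funext => t; rewrite adjE.
by rewrite cD_conj.
Qed.

End MD.

Lemma pderivE (R : realType) m p q (j : 'I_m) (F : 'rV[R]_m -> 'M[R[i]]_(p,q)) th :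
  pderiv j F th = mcD th (evec R j) F.
Proof. by []. Qed.

End MH5.
Import MH5.

Module MH6.
Set Implicit Arguments. Unset Strict Implicit.
Local Open Scope ring_scope.
Local Open Scope complex_scope.

Section HF.
Variable R : realType.
Local Notation C := R[i].
Variable d : nat.

Lemma Re_sum I (r : seq I) (F : I -> C) : complex.Re (\sum_(i <- r) F i) = \sum_(i <- r) complex.Re (F i).
Proof. elim: r => [|a r IH]; first by rewrite !big_nil. by rewrite !big_cons ReD IH. Qed.

Lemma Re_realM (c : R) (z : C) : complex.Re (c%:C * z) = c * complex.Re z.
Proof. by case: z => a b /=; ring. Qed.

Definition hf (N : 'M[C]_d) (Y Z : 'cV[C]_d) : R := complex.Re ((adj Y *m N *m Z) 0 0).

Lemma hfDr N Y Z1 Z2 : hf N Y (Z1 + Z2) = hf N Y Z1 + hf N Y Z2.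
Proof. by rewrite /hf mulmxDr mxE ReD. Qed.
Lemma hfDl N Y1 Y2 Z : hf N (Y1 + Y2) Z = hf N Y1 Z + hf N Y2 Z.
Proof. by rewrite /hf adjD !mulmxDl mxE ReD. Qed.
Lemma hfZr N Y (c : R) Z : hf N Y (c%:C *: Z) = c * hf N Y Z.
Proof. by rewrite /hf -scalemxAr mxE Re_realM. Qed.
Lemma hfZl N (c : R) Y Z : hf N (c%:C *: Y) Z = c * hf N Y Z.
Proof. by rewrite /hf adjZr -!scalemxAl mxE Re_realM. Qed.
Lemma hfsumr N Y I (r : seq I) (Z : I -> 'cV[C]_d) :
  hf N Y (\sum_(i <- r) Z i) = \sum_(i <- r) hf N Y (Z i).
Proof.
elim: r => [|a r IH]; last by rewrite !big_cons hfDr IH.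
by rewrite !big_nil /hf mulmx0 mxE.
Qed.
Lemma hfsuml N Z I (r : seq I) (Y : I -> 'cV[C]_d) :
  hf N (\sum_(i <- r) Y i) Z = \sum_(i <- r) hf N (Y i) Z.
Proof.
elim: r => [|a r IH]; last by rewrite !big_cons hfDl IH.
rewrite !big_nil /hf.
have -> : adj (0 : 'cV[C]_d) = 0 by apply/matrixP=> i j; rewrite !mxE rmorph0.
by rewrite !mul0mx mxE.
Qed.
Lemma hfsumN I (r : seq I) (N : I -> 'M[C]_d) Y Z :
  \sum_(i <- r) hf (N i) Y Z = hf (\sum_(i <- r) N i) Y Z.
Proof.
elim: r => [|a r IH]; first by rewrite !big_nil /hf mulmx0 mul0mx mxE.
by rewrite !big_cons IH /hf mulmxDr mulmxDl [in RHS]mxE ReD.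

Qed.

Lemma adj00 (A : 'M[C]_1) : adj A 0 0 = Num.conj (A 0 0).
Proof. by rewrite adjE. Qed.

Lemma hf_sym (N : 'M[C]_d) (Y Z : 'cV[C]_d) : Defs.hermitian N -> hf N Y Z = hf N Z Y.
Proof.
move=> hN; rewrite /hf.
have -> : adj Z *m N *m Y = adj (adj Y *m N *m Z).
  by rewrite !adj_mul adjK hN mulmxA.
by rewrite adj00 ReJ.
Qed.

Lemma hf_ge0 (N : 'M[C]_d) (Y : 'cV[C]_d) : psd N -> 0 <= hf N Y Y.
Proof. by move=> pN; have := pN Y; rewrite lecE => /andP[_]. Qed.

End HF.

End MH6.
Import MH6.

Module MH7.
Set Implicit Arguments. Unset Strict Implicit.
Local Open Scope ring_scope.

Lemma discr (R : realFieldType) (a b c : R) :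
  (forall t : R, 0 <= a + 2 * b * t + c * t ^+ 2) -> 0 <= c -> b ^+ 2 <= a * c.
Proof.
move=> H c0; have [cz|cp] := eqVneq c 0.
  subst c; rewrite mulr0.
  have [bz|bn] := eqVneq b 0; first by rewrite bz expr0n.
  have := H (- (a + 1) / (2 * b)).
  have -> : 2 * b * (- (a + 1) / (2 * b)) = - (a + 1).
    by field.
  by rewrite mul0r addr0; lra.
have cp' : 0 < c by rewrite lt_def cp c0.
have := H (- b / c).
have -> : a + 2 * b * (- b / c) + c * (- b / c) ^+ 2 = (a * c - b ^+ 2) / c.
  by field.
by rewrite pmulr_lge0 ?invr_gt0 // subr_ge0.
Qed.

Lemma fisher_term (R : realFieldType) (a b c : R) :
  (forall t : R, 0 <= a + 2 * b * t + c * t ^+ 2) -> 0 <= c ->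
  a^-1 * (2 * b) ^+ 2 <= 4 * c.
Proof.
move=> H c0; have a0 : 0 <= a by have := H 0; rewrite mulr0 expr0n /= mulr0 !addr0.
have D := discr H c0.
have [az|ap] := eqVneq a 0.
  by rewrite az invr0 mul0r mulr_ge0.
have ap' : 0 < a by rewrite lt_def ap a0.
have -> : a^-1 * (2 * b) ^+ 2 = 4 * (b ^+ 2 / a) by field.
by rewrite ler_pM2l ?ltr0n // ler_pdivrMr // mulrC.
Qed.

End MH7.
Import MH7.

Module MH8.
Set Implicit Arguments. Unset Strict Implicit.
Local Open Scope ring_scope.
Local Open Scope complex_scope.

Section Main.
Variable R : realType.
Local Notation C := R[i].

Lemma tr1 (A : 'M[C]_1) : \tr A = A 0 0.
Proof. by rewrite /mxtrace big_ord1. Qed.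

Lemma proj_density d (psi0 : 'cV[C]_d) : adj psi0 *m psi0 = 1%:M -> density (Defs.proj psi0).
Proof.
move=> n1; split; last split.
- by rewrite /Defs.hermitian /Defs.proj adj_mul adjK.
- move=> w; rewrite /Defs.proj.
  have -> : adj w *m (psi0 *m adj psi0) *m w = adj (adj psi0 *m w) *m (adj psi0 *m w).
    by rewrite adj_mul adjK !mulmxA.
  rewrite mxE big_ord1 adjE mulrC.
  by case: ((adj psi0 *m w) 0 0) => a b; rewrite lecE /=; apply/andP; split;
     [apply/eqP; ring | rewrite -!expr2 addr_ge0 // ?sqr_ge0 // -mulrN opprK -expr2 sqr_ge0].
- by rewrite /Defs.proj mxtrace_mulC n1 tr1 mxE.
Qed.

Lemma outprob_eq m d K n (E : 'rV[R]_m -> 'I_K -> 'M[C]_d) (psi0 : 'cV[C]_d)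
    (U : 'rV[R]_m -> 'I_d -> 'M[C]_d) (M : 'I_n -> 'M[C]_d) o :
  (forall th rho, density rho -> channel (E th) rho = channel (U th) rho) ->
  density (Defs.proj psi0) ->
  outprob E psi0 M o = (fun t => complex.Re (\sum_(l < d)
      (adj (U t l *m psi0) *m M o *m (U t l *m psi0)) 0 0)).
Proof.
move=> chan dens; apply: funext => t.
rewrite /outprob chan // /channel mulmx_suml (raddf_sum (@mxtrace _ d)) raddf_sum [RHS]raddf_sum /=.
apply: eq_bigr => l _.
rewrite /Defs.proj.
have -> : U t l *m (psi0 *m adj psi0) *m adj (U t l) *m M o =
   (U t l *m psi0) *m (adj psi0 *m adj (U t l) *m M o) by rewrite !mulmxA.
by rewrite mxtrace_mulC tr1 adj_mul !mulmxA.
Qed.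

Section Der.
Variables (m d : nat) (U : 'rV[R]_m -> 'I_d -> 'M[C]_d) (psi0 : 'cV[C]_d) (th : 'rV[R]_m) (j : 'I_m).
Variable (N : 'M[C]_d) (l : 'I_d).
Hypothesis dU : mcder th (evec R j) (fun t => U t l).

Lemma dUpsi : mcder th (evec R j) (fun t => U t l *m psi0).
Proof. by apply: mcder_mul; [exact: dU | exact: mcder_cst]. Qed.

Lemma eUpsi : mcD th (evec R j) (fun t => U t l *m psi0) = pderiv j (fun t => U t l) th *m psi0.
Proof.
rewrite (mcD_mul dU (mcder_cst th (evec R j) psi0)).
by rewrite mcD_cst mulmx0 addr0 pderivE.
Qed.

Lemma cderQ : cder th (evec R j) (fun t => (adj (U t l *m psi0) *m N *m (U t l *m psi0)) 0 0).
Proof.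
exact: (mcder_mul (mcder_mul (mcder_adj dUpsi) (mcder_cst th (evec R j) N)) dUpsi).
Qed.

Lemma cDQ : cD th (evec R j) (fun t => (adj (U t l *m psi0) *m N *m (U t l *m psi0)) 0 0) =
  (adj (pderiv j (fun t => U t l) th *m psi0) *m N *m (U th l *m psi0) +
   adj (U th l *m psi0) *m N *m (pderiv j (fun t => U t l) th *m psi0)) 0 0.
Proof.
have dA := mcder_adj dUpsi.
have dAM : mcder th (evec R j) (fun t => adj (U t l *m psi0) *m N).
  exact: (mcder_mul dA (mcder_cst th (evec R j) N)).
transitivity ((mcD th (evec R j) (fun t => adj (U t l *m psi0) *m N *m (U t l *m psi0))) 0 0).
  by rewrite /mcD mxE.
rewrite (mcD_mul dAM dUpsi).
rewrite (mcD_mul dA (mcder_cst th (evec R j) N)).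
by rewrite mcD_cst mulmx0 addr0 (mcD_adj dUpsi) eUpsi.
Qed.
End Der.

Lemma d_outprob m d K n (E : 'rV[R]_m -> 'I_K -> 'M[C]_d) (psi0 : 'cV[C]_d)
    (U : 'rV[R]_m -> 'I_d -> 'M[C]_d) (M : 'I_n -> 'M[C]_d) o th j :
  (forall th rho, density rho -> channel (E th) rho = channel (U th) rho) ->
  density (Defs.proj psi0) ->
  (forall l, mcder th (evec R j) (fun t => U t l)) ->
  'D_(evec R j) (outprob E psi0 M o) th =
  \sum_(l < d) (hf (M o) (pderiv j (fun t => U t l) th *m psi0) (U th l *m psi0) +
                hf (M o) (U th l *m psi0) (pderiv j (fun t => U t l) th *m psi0)).
Proof.
move=> chan dens dU; rewrite (outprob_eq M o chan dens).
set Q := fun l t => (adj (U t l *m psi0) *m M o *m (U t l *m psi0)) 0 0.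
have -> : (fun t => complex.Re (\sum_(l < d) (adj (U t l *m psi0) *m M o *m (U t l *m psi0)) 0 0))
   = (fun t => complex.Re (\sum_(l <- index_enum 'I_d) Q l t)) by [].
transitivity (complex.Re (cD th (evec R j) (fun t => \sum_(l <- index_enum 'I_d) Q l t))); first by [].
rewrite cD_sum; last by move=> l; apply: cderQ.
rewrite Re_sum; apply: eq_bigr => l _.
by rewrite /Q cDQ // mxE ReD.
Qed.

End Main.

End MH8.
Import MH8.

Module MH9.
Set Implicit Arguments. Unset Strict Implicit.
Local Open Scope ring_scope.

Lemma quadE (R : comRingType) m (w : 'rV[R]_m) (A : 'M[R]_m) :
  (w *m A *m w^T) 0 0 = \sum_k w 0 k * \sum_j w 0 j * A j k.
Proof.
rewrite mxE; apply: eq_bigr => k _; rewrite !mxE; exact: mulrC.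
Qed.

Lemma quad_gram (R : comRingType) m n (w : 'rV[R]_m) (a : 'I_n -> R) (f : 'I_n -> 'I_m -> R) :
  (w *m (\matrix_(j, k) \sum_(o < n) (a o * f o j * f o k)) *m w^T) 0 0 =
  \sum_(o < n) a o * (\sum_j w 0 j * f o j) ^+ 2.
Proof.
rewrite quadE.
transitivity (\sum_k \sum_j \sum_(o < n) w 0 k * (w 0 j * (a o * f o j * f o k))).
  apply: eq_bigr => k _; rewrite mulr_sumr; apply: eq_bigr => j _.
  by rewrite mxE !mulr_sumr.
under eq_bigr => k _ do rewrite exchange_big /=.
rewrite exchange_big /=; apply: eq_bigr => o _.
rewrite expr2 mulr_suml mulr_sumr; apply: eq_bigr => k _.
rewrite mulr_sumr mulr_sumr; apply: eq_bigr => j _.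
by ring.
Qed.

End MH9.
Import MH9.

Local Open Scope ring_scope.
Local Open Scope complex_scope.

Lemma Centry (R : realType) d (A B : 'M[R[i]]_d) (psi0 : 'cV[R[i]]_d) :
  complex.Re (\tr (A *m Defs.proj psi0 *m adj B)) = hf 1%:M (B *m psi0) (A *m psi0).
Proof.
rewrite /hf /Defs.proj mulmx1.
have -> : A *m (psi0 *m adj psi0) *m adj B = (A *m psi0) *m (adj psi0 *m adj B) by rewrite !mulmxA.
by rewrite mxtrace_mulC tr1 adj_mul.
Qed.

Theorem theorem2 (R : realType) (m d K n : nat)
    (E : 'rV[R]_m -> 'I_K -> 'M[R[i]]_d) (psi0 : 'cV[R[i]]_d)
    (U : 'rV[R]_m -> 'I_d -> 'M[R[i]]_d) (M : 'I_n -> 'M[R[i]]_d)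
    (th : 'rV[R]_m) :
  kraus_family E ->
  (adj psi0 *m psi0 = 1%:M) ->
  canonical_kraus E psi0 U ->
  povm M ->
  mx_le (fisher E psi0 M th) (C_Ups U psi0 th).
Proof.
move=> _ n1 [[_ dUall] [chan _]] [hM [pM sM]].
have dens := proj_density n1.
have dU : forall j l, mcder th (evec R j) (fun t => U t l).
  move=> j l a b; have [h1 h2] := dUall l a b th; split; exact: diff_derivable.
set X := fun l => U th l *m psi0.
set P := fun j l => pderiv j (fun t => U t l) th *m psi0.
move=> w.
set B := fun l => \sum_j (w 0 j)%:C *: P j l.
have hd : forall o j, 'D_(evec R j) (outprob E psi0 M o) th = 2 * \sum_l hf (M o) (X l) (P j l).
  move=> o j; rewrite (d_outprob M o (j:=j) chan dens (dU j)) mulr_sumr; apply: eq_bigr => l _.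
  by rewrite (hf_sym _ _ (hM o)); rewrite /X /P; ring.
have hp : forall o, outprob E psi0 M o th = \sum_l hf (M o) (X l) (X l).
  by move=> o; rewrite (outprob_eq M o chan dens) /= Re_sum.
have hwd : forall o, \sum_j w 0 j * 'D_(evec R j) (outprob E psi0 M o) th =
                     2 * \sum_l hf (M o) (X l) (B l).
  move=> o; transitivity (2 * \sum_l \sum_j w 0 j * hf (M o) (X l) (P j l)).
    rewrite exchange_big mulr_sumr; apply: eq_bigr => j _.
    by rewrite hd mulrCA mulr_sumr.
  congr (_ * _); apply: eq_bigr => l _; rewrite hfsumr; apply: eq_bigr => j _.
  by rewrite hfZr.
have QF : (w *m fisher E psi0 M th *m w^T) 0 0 =
    \sum_(o < n) (outprob E psi0 M o th)^-1 *
       (\sum_j w 0 j * 'D_(evec R j) (outprob E psi0 M o) th) ^+ 2.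
  exact: (quad_gram w (fun o => (outprob E psi0 M o th)^-1)
                      (fun o j => 'D_(evec R j) (outprob E psi0 M o) th)).
have QC : (w *m C_Ups U psi0 th *m w^T) 0 0 = 4 * \sum_l hf 1%:M (B l) (B l).
  rewrite quadE.
  transitivity (\sum_k \sum_j \sum_l (4 * (w 0 k * (w 0 j * hf 1%:M (P k l) (P j l))))).
    apply: eq_bigr => k _; rewrite mulr_sumr; apply: eq_bigr => j _.
    rewrite mxE !mulr_sumr; apply: eq_bigr => l _.
    by rewrite Centry; ring.
  under eq_bigr => k _ do rewrite exchange_big /=.
  rewrite exchange_big /= mulr_sumr; apply: eq_bigr => l _.
  rewrite /B hfsuml mulr_sumr; apply: eq_bigr => k _.
  rewrite hfZl hfsumr !mulr_sumr; apply: eq_bigr => j _.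
  by rewrite hfZr.
have -> : (w *m (C_Ups U psi0 th - fisher E psi0 M th) *m w^T) 0 0 =
    (w *m C_Ups U psi0 th *m w^T) 0 0 - (w *m fisher E psi0 M th *m w^T) 0 0.
  by rewrite mulmxBr mulmxBl mxE [X in _ + X = _]mxE.
rewrite subr_ge0 QF QC.
have -> : 4 * \sum_l hf 1%:M (B l) (B l) = \sum_(o < n) (4 * \sum_l hf (M o) (B l) (B l)).
  rewrite -mulr_sumr exchange_big /=; congr (_ * _); apply: eq_bigr => l _.
  by rewrite hfsumN sM.
apply: ler_sum => o _.
rewrite hwd hp; apply: fisher_term; last by apply: sumr_ge0 => l _; apply: hf_ge0.
move=> t.
have G : 0 <= \sum_l hf (M o) (X l + t%:C *: B l) (X l + t%:C *: B l).
  by apply: sumr_ge0 => l _; apply: hf_ge0.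
have Eq : \sum_l hf (M o) (X l + t%:C *: B l) (X l + t%:C *: B l) =
    \sum_l hf (M o) (X l) (X l) + 2 * (\sum_l hf (M o) (X l) (B l)) * t +
    (\sum_l hf (M o) (B l) (B l)) * t ^+ 2.
  rewrite mulr_sumr !mulr_suml -!big_split /=; apply: eq_bigr => l _.
  rewrite !hfDl !hfDr !hfZl !hfZr (hf_sym (B l) (X l) (hM o)); ring.
rewrite Eq in G; exact: G.
Qed.
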